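(* Let $A\in\mathbb{Z}^{m\times n}$ have full column rank, $b\in\mathbb{Z}^m$, $c\in\mathbb{Q}^n$, and let $x^*$ be an optimal vertex of $\max\{c^\top x: Ax\le b,\ x\in\mathbb{R}^n\}$, where the integer program $\max\{c^\top x: Ax\le b,\ x\in\mathbb{Z}^n\}$ is feasible. Then there exist an optimal solution $z^*$ of this integer program, an integral matrix $\bar A$ whose rows are rows of $A$ or their negatives, and an integral vector $\bar b$ such that $\{x:\bar Ax\le\bar b\}\subseteq\{x:Ax\le b\}$, $x^*$ is a vertex of $\{x:\bar Ax\le \bar b\}$, and $\{x:\bar Ax\le\bar b\}\cap\mathbb{Z}^n=\{z^*\}$. *)

(* Defs.v *)
From HB Require Import structures.
From mathcomp Require Import all_boot all_order all_algebra.
From mathcomp Require Import reals.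
Set Implicit Arguments. Unset Strict Implicit. Unset Printing Implicit Defensive.
Import Order.TTheory GRing.Theory Num.Theory.
Local Open Scope ring_scope.

Section Defs.
Variable R : realType.

Definition imx (m n : nat) (A : 'M[int]_(m, n)) : 'M[R]_(m, n) := map_mx intr A.
Definition qmx (m n : nat) (A : 'M[rat]_(m, n)) : 'M[R]_(m, n) := map_mx ratr A.

Definition polyh (m n : nat) (A : 'M[int]_(m, n)) (b : 'cV[int]_m) (x : 'cV[R]_n) : Prop :=
  forall i : 'I_m, (imx A *m x) i 0 <= (imx b) i 0.

Definition obj (n : nat) (c : 'cV[rat]_n) (x : 'cV[R]_n) : R := ((qmx c)^T *m x) 0 0.

Definition is_vertex (n : nat) (P : 'cV[R]_n -> Prop) (x : 'cV[R]_n) : Prop :=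
  P x /\ forall y z : 'cV[R]_n, P y -> P z ->
    forall t : R, 0 < t -> t < 1 -> x = t *: y + (1 - t) *: z -> y = x /\ z = x.

Definition lp_optimal (m n : nat) (A : 'M[int]_(m, n)) (b : 'cV[int]_m) (c : 'cV[rat]_n)
  (x : 'cV[R]_n) : Prop :=
  polyh A b x /\ forall y, polyh A b y -> obj c y <= obj c x.

Definition ip_feasible (m n : nat) (A : 'M[int]_(m, n)) (b : 'cV[int]_m) (z : 'cV[int]_n) : Prop :=
  polyh A b (imx z).

Definition ip_optimal (m n : nat) (A : 'M[int]_(m, n)) (b : 'cV[int]_m) (c : 'cV[rat]_n)
  (z : 'cV[int]_n) : Prop :=
  ip_feasible A b z /\
  forall w : 'cV[int]_n, ip_feasible A b w -> obj c (imx w) <= obj c (imx z).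

End Defs.

(* Main.v *)
Require Import Defs.
From HB Require Import structures.
From mathcomp Require Import all_boot all_order all_algebra.
From mathcomp Require Import reals.
From mathcomp Require Import zify ring lra.
From Stdlib Require Import Classical.
Import Order.TTheory GRing.Theory Num.Theory.
Local Open Scope ring_scope.

Section Proof.
Variables (R : realType) (m n : nat) (A : 'M[int]_(m, n)) (b : 'cV[int]_m)
  (c : 'cV[rat]_n) (xs : 'cV[R]_n).

Definition ax i := (imx R A *m xs) i 0.

Lemma polyhE (x : 'cV[R]_n) (e : R) (d : 'cV[R]_n) i :
  (imx R A *m (x + e *: d)) i 0 = (imx R A *m x) i 0 + e * (imx R A *m d) i 0.
Proof. by rewrite mulmxDr -scalemxAr !mxE. Qed.

Lemma imxbE i : (imx R b) i 0 = (b i 0)%:~R.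
Proof. by rewrite mxE. Qed.

Lemma slack_dir (d : 'cV[R]_n) : polyh A b xs ->
  (forall i, 0 < (imx R A *m d) i 0 -> ax i < (b i 0)%:~R) ->
  exists N : nat, forall M, (N <= M)%N -> polyh A b (xs + (M.+1%:R)^-1 *: d).
Proof.
move=> Hx Hs.
pose Ni i := if ax i < (b i 0)%:~R then
   Num.Def.archi_bound (`|(imx R A *m d) i 0| / ((b i 0)%:~R - ax i)) else 0%N.
exists (\max_i Ni i) => M HM; rewrite /polyh => i.
rewrite polyhE imxbE.
have Hxi : ax i <= (b i 0)%:~R by move: (Hx i); rewrite imxbE.
set a := (imx R A *m d) i 0.
have He : 0 < (M.+1%:R : R)^-1 by rewrite invr_gt0 ltr0n.
case: (lerP a 0) => Ha.
  rewrite -/(ax i); apply: le_trans Hxi; rewrite gerDl.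
  by rewrite pmulr_rle0.
have Hsl := Hs i Ha.
have Hs0 : 0 < (b i 0)%:~R - ax i by rewrite subr_gt0.
have HN : (Ni i <= M)%N by apply: leq_trans HM; apply: leq_bigmax.
move: HN; rewrite /Ni Hsl -/a gtr0_norm // => HN.
have := archi_boundP (divr_ge0 (normr_ge0 a) (ltW Hs0)).
rewrite gtr0_norm // => Hb.
have HbM : a / ((b i 0)%:~R - ax i) < M.+1%:R.
  apply: (lt_le_trans Hb); rewrite ler_nat; exact: leq_trans HN (leqnSn M).
rewrite ltr_pdivrMr // in HbM.
rewrite -/(ax i) -lerBrDl mulrC -ler_pdivlMr ?ltr0n // invrK.
by rewrite mulrC ltW.
Qed.


Definition aw (w : 'cV[int]_n) i := (A *m w) i 0.

Lemma imxAw (w : 'cV[int]_n) i : (imx R A *m imx R w) i 0 = (aw w i)%:~R.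
Proof. by rewrite /imx -map_mxM mxE. Qed.

Lemma feasE w : ip_feasible R A b w <-> forall i, aw w i <= b i 0.
Proof.
rewrite /ip_feasible /polyh; split => H i; first by move: (H i); rewrite imxAw imxbE ler_int.
by have := H i; rewrite -(ler_int R) -imxbE -imxAw.
Qed.

Definition fl i := Num.floor (ax i).
Definition ce i := Num.ceil (ax i).
Definition lo w i := Order.min (aw w i) (fl i).
Definition hi w i := Order.max (aw w i) (ce i).
Definition inQ w y := forall i, lo w i <= aw y i <= hi w i.

Lemma objD (x d : 'cV[R]_n) (e : R) : obj c (x + e *: d) = obj c x + e * obj c d.
Proof. by rewrite /obj mulmxDr -scalemxAr !mxE. Qed.

Lemma objB (x y : 'cV[R]_n) : obj c (x - y) = obj c x - obj c y.
Proof. by rewrite /obj mulmxBr !mxE. Qed.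

Lemma AdE (y z : 'cV[int]_n) i :
  (imx R A *m (imx R y - imx R z)) i 0 = (aw y i - aw z i)%:~R.
Proof. by rewrite mulmxBr [LHS]mxE [X in _ + X]mxE !imxAw rmorphB. Qed.

Hypothesis Hx : polyh A b xs.

Lemma fl_le i : (fl i)%:~R <= ax i. Proof. exact: floor_le. Qed.
Lemma ce_ge i : ax i <= (ce i)%:~R. Proof. exact: ceil_ge. Qed.
Lemma axb i : ax i <= (b i 0)%:~R. Proof. by move: (Hx i); rewrite imxbE. Qed.
Lemma ce_b i : ce i <= b i 0. Proof. by rewrite ceil_le_int axb. Qed.
Lemma fl_ce i : fl i <= ce i.
Proof. by rewrite -(ler_int R); apply: le_trans (fl_le i) (ce_ge i). Qed.
Lemma tight i : ~ (ax i < (b i 0)%:~R) -> fl i = b i 0 /\ ce i = b i 0.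
Proof.
move=> H; have E : ax i = (b i 0)%:~R.
  by apply/eqP; rewrite eq_le axb /=; rewrite leNgt; apply/negP.
by rewrite /fl /ce E intrKfloor intrKceil.
Qed.

Lemma inQ_feas zs y : ip_feasible R A b zs -> inQ zs y -> ip_feasible R A b y.
Proof.
move=> /feasE Hz Hy; apply/feasE => i.
have := Hy i; have := Hz i; have := ce_b i; rewrite /hi; lia.
Qed.

Hypothesis Hopt : lp_optimal A b c xs.

Lemma arg1 zs y : ip_feasible R A b zs -> inQ zs y -> obj c (imx R zs) <= obj c (imx R y).
Proof.
move=> Hz Hy.
have Hs : forall i, 0 < (imx R A *m (imx R zs - imx R y)) i 0 -> ax i < (b i 0)%:~R.
  move=> i; rewrite AdE ltr0z => Hlt.
  case: (boolP (ax i < (b i 0)%:~R)) => // /negP Hn; exfalso.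
  have [Hf _] := tight i Hn.
  have := Hy i; move: Hz => /feasE /(_ i); rewrite /lo; lia.
have [N HN] := @slack_dir _ Hx Hs.
have := HN N (leqnn N) => /(proj2 Hopt).
rewrite objD objB gerDl pmulr_rle0 ?invr_gt0 ?ltr0n // subr_le0 => //.
Qed.

Lemma arg2h z y : inQ z y -> inQ y z ->
  exists N : nat, forall M, (N <= M)%N -> polyh A b (xs + (M.+1%:R)^-1 *: (imx R y - imx R z)).
Proof.
move=> Hzy Hyz; apply: (@slack_dir _ Hx).
move=> i; rewrite AdE ltr0z => Hlt.
case: (boolP (ax i < (b i 0)%:~R)) => // /negP Hn; exfalso.
have [Hf Hc] := tight i Hn.
have := Hzy i; have := Hyz i; rewrite /lo /hi; lia.
Qed.

Hypothesis Hv : is_vertex (polyh A b) xs.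

Lemma arg2 z y : inQ z y -> inQ y z -> y = z.
Proof.
move=> Hzy Hyz.
have [N1 H1] := @arg2h _ _ Hzy Hyz.
have [N2 H2] := @arg2h _ _ Hyz Hzy.
set N := maxn N1 N2.
have P1 := H1 N (leq_maxl _ _).
have P2 := H2 N (leq_maxr _ _).
set e : R := (N.+1%:R)^-1.
have He : e != 0 by rewrite invr_eq0 pnatr_eq0.
have Hc : xs = 2^-1 *: (xs + e *: (imx R y - imx R z)) + (1 - 2^-1) *: (xs + e *: (imx R z - imx R y)).
  apply/matrixP => i j; rewrite !mxE; by field.
have h1 : (0:R) < 2^-1 by rewrite invr_gt0.
have h2 : (2^-1 : R) < 1 by rewrite invf_lt1 // ltr1n.
have [E1 _] := proj2 Hv _ _ P1 P2 (2^-1) h1 h2 Hc.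
have : e *: (imx R y - imx R z) = 0 by apply: (addrI xs); rewrite addr0.
move/eqP; rewrite scaler_eq0 (negbTE He) /= subr_eq0 => /eqP E.
apply/matrixP => i j; have := congr1 (fun M : 'M[R]_(n,1) => M i j) E; rewrite /= !mxE.
exact: intr_inj.
Qed.


Definition mu w := (\sum_(i < m) absz (hi w i - lo w i))%N.

Lemma mu_lt zs y : inQ zs y -> ~ inQ y zs -> (mu y < mu zs)%N.
Proof.
move=> Hy Hn.
have Hle : forall i, (absz (hi y i - lo y i) <= absz (hi zs i - lo zs i))%N.
  by move=> i; have := Hy i; rewrite /hi /lo; lia.
have [j Hj] : exists j, ~ (lo y j <= aw zs j <= hi y j) by apply: not_all_ex_not.
have Hlt : (absz (hi y j - lo y j) < absz (hi zs j - lo zs j))%N.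
  have := Hy j; move: Hj; rewrite /hi /lo; lia.
rewrite /mu (bigD1 j) //= [X in (_ < X)%N](bigD1 j) //=.
rewrite -addSn; apply: leq_add => //; apply: leq_sum => i _; exact: Hle.
Qed.

Definition q (w : 'cV[int]_n) : rat := (c^T *m map_mx intr w) 0 0.

Lemma objq w : obj c (imx R w) = ratr (q w).
Proof.
have -> : imx R w = map_mx ratr (map_mx intr w).
  by apply/matrixP => i j; rewrite !mxE ratr_int.
by rewrite /obj /qmx map_trmx -map_mxM mxE.
Qed.

Definition Dq : int := \prod_(j < n) denq (c j 0).
Definition K (w : 'cV[int]_n) : int :=
  \sum_(j < n) numq (c j 0) * (\prod_(k < n | k != j) denq (c k 0)) * w j 0.

Lemma Kq w : ((K w)%:~R : rat) = (Dq%:~R : rat) * q w.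
Proof.
rewrite /q mxE mulr_sumr /K rmorph_sum; apply: eq_bigr => j _.
rewrite /Dq [\prod_(j0 < n) _](bigD1 j) //= !mxE !rmorphM /= numqE; ring.
Qed.

Lemma Dq_gt0 : 0 < Dq.
Proof. by apply: prodr_gt0 => j _; exact: denq_gt0. Qed.

Lemma K_mono w w' : obj c (imx R w) < obj c (imx R w') -> K w < K w'.
Proof.
rewrite !objq ltr_rat => H.
rewrite -(ltr_int rat) !Kq ltr_pM2l //; by rewrite ltr0z Dq_gt0.
Qed.

Definition B := Num.floor (ratr (Dq%:~R : rat) * obj c xs : R).

Lemma K_bound w : ip_feasible R A b w -> K w <= B.
Proof.
move=> Hw; rewrite /B floor_ge_int -ratr_int Kq rmorphM /= -objq.
apply: ler_wpM2l; last exact: (proj2 Hopt _ Hw).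
by rewrite ler0q ler0z ltW // Dq_gt0.
Qed.

Lemma exists_opt : (exists z, ip_feasible R A b z) -> exists z, ip_optimal R A b c z.
Proof.
have main : forall k : nat, forall w, ip_feasible R A b w -> B - K w <= k%:Z ->
    exists z, ip_optimal R A b c z.
  elim=> [|k IH] w Hw Hk;
  (case: (classic (forall w', ip_feasible R A b w' -> obj c (imx R w') <= obj c (imx R w))) => H;
    [by exists w; split|]);
  have [w' Hw'] := not_all_ex_not _ _ H;
  have [Hf' Hn'] := imply_to_and _ _ Hw';
  have Hlt : obj c (imx R w) < obj c (imx R w') by rewrite ltNge; apply/negP.
  - have := @K_mono _ _ Hlt; have := @K_bound _ Hf'; lia.
  - apply: (IH w' Hf'); have := @K_mono _ _ Hlt; lia.
move=> [w Hw]; apply: (main (absz (B - K w)) w Hw).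
have := @K_bound _ Hw; lia.
Qed.

Lemma exists_min z0 : ip_optimal R A b c z0 ->
  exists zs, ip_optimal R A b c zs /\ forall y, ip_optimal R A b c y -> ~ (mu y < mu zs)%N.
Proof.
have main : forall k : nat, forall z, ip_optimal R A b c z -> (mu z <= k)%N ->
    exists zs, ip_optimal R A b c zs /\ forall y, ip_optimal R A b c y -> ~ (mu y < mu zs)%N.
  elim=> [|k IH] z Hz Hk;
  (case: (classic (exists y, ip_optimal R A b c y /\ (mu y < mu z)%N)) => H;
    [|by exists z; split => // y Hy Hl; apply: H; exists y]);
  have [y [Hy Hl]] := H.
  - lia.
  - apply: (IH y Hy); lia.
move=> H; exact: (main _ z0 H (leqnn _)).
Qed.


Definition bbf (l u : 'I_m -> int) : 'cV[int]_(m + m) := col_mx (\col_i u i) (- \col_i l i).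

Lemma polyhQ l u (x : 'cV[R]_n) :
  polyh (col_mx A (-A)) (bbf l u) x <->
  forall i, (l i)%:~R <= (imx R A *m x) i 0 <= (u i)%:~R.
Proof.
have E : imx R (col_mx A (-A)) *m x = col_mx (imx R A *m x) (- (imx R A *m x)).
  by rewrite /imx map_col_mx map_mxN mul_col_mx mulNmx.
rewrite /polyh E; move: (imx R A *m x) => Ax; rewrite /imx /bbf map_col_mx map_mxN; split.
  move=> H i; have := H (lshift m i); have := H (rshift m i).
  rewrite !col_mxEu !col_mxEd !mxE lerN2 => h1 h2; by apply/andP.
move=> H r; rewrite -(splitK r); case: (split r) => i /=.
  by rewrite !col_mxEu !mxE; case/andP: (H i).
by rewrite !col_mxEd !mxE lerN2; case/andP: (H i).
Qed.



Lemma main_sec : (exists z, ip_feasible R A b z) ->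
  exists (zs : 'cV[int]_n) (k : nat) (Ab : 'M[int]_(k, n)) (bb : 'cV[int]_k),
    [/\ ip_optimal R A b c zs,
        (forall r : 'I_k, exists i : 'I_m, row r Ab = row i A \/ row r Ab = - row i A),
        (forall x : 'cV[R]_n, polyh Ab bb x -> polyh A b x),
        is_vertex (polyh Ab bb) xs
      & (forall z : 'cV[int]_n, ip_feasible R Ab bb z <-> z = zs)].
Proof.
move=> Hfe.
have [z0 Hz0] := exists_opt Hfe.
have [zs [Hzs Hmin]] := @exists_min _ Hz0.
have HQP : forall x : 'cV[R]_n, polyh (col_mx A (-A)) (bbf (lo zs) (hi zs)) x -> polyh A b x.
  move=> x /polyhQ H i; rewrite imxbE; case/andP: (H i) => _ H2.
  apply: le_trans H2 _; rewrite ler_int.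
  have := proj1 (feasE zs) (proj1 Hzs) i; have := ce_b i; rewrite /hi; lia.
exists zs, (m + m)%N, (col_mx A (-A)), (bbf (lo zs) (hi zs)); split => //.
- move=> r; rewrite -(splitK r); case: (split r) => i /=; exists i.
    by left; rewrite rowKu.
  by right; rewrite rowKd; apply/rowP => j; rewrite !mxE.
- split.
    apply/polyhQ => i; apply/andP; split.
      apply: le_trans (fl_le i); rewrite ler_int /lo; lia.
    apply: le_trans (ce_ge i) _; rewrite ler_int /hi; lia.
  move=> y z Hy Hz; exact: (proj2 Hv y z (HQP _ Hy) (HQP _ Hz)).
- move=> z; split; last first.
    move=> ->; apply/polyhQ => i; rewrite imxAw !ler_int /lo /hi; apply/andP; lia.
  move=> /polyhQ H.
  have HQ : inQ zs z by move=> i; have := H i; rewrite imxAw !ler_int.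
  have Hfz := @inQ_feas _ _ (proj1 Hzs) HQ.
  have Hoz : ip_optimal R A b c z.
    split => // w Hw; apply: le_trans (proj2 Hzs w Hw) _; exact: (@arg1 _ _ (proj1 Hzs) HQ).
  case: (classic (inQ z zs)) => Hc.
    exact: (@arg2 _ _ HQ Hc).
  by exfalso; apply: (Hmin z Hoz); apply: mu_lt.
Qed.

End Proof.

Theorem lemma8 (R : realType) (m n : nat) (A : 'M[int]_(m, n)) (b : 'cV[int]_m)
  (c : 'cV[rat]_n) (xs : 'cV[R]_n) :
  \rank (imx R A) = n ->
  is_vertex (polyh A b) xs ->
  lp_optimal A b c xs ->
  (exists z : 'cV[int]_n, ip_feasible R A b z) ->
  exists (zs : 'cV[int]_n) (k : nat) (Ab : 'M[int]_(k, n)) (bb : 'cV[int]_k),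
    [/\ ip_optimal R A b c zs,
        (forall r : 'I_k, exists i : 'I_m, row r Ab = row i A \/ row r Ab = - row i A),
        (forall x : 'cV[R]_n, polyh Ab bb x -> polyh A b x),
        is_vertex (polyh Ab bb) xs
      & (forall z : 'cV[int]_n, ip_feasible R Ab bb z <-> z = zs)].
Proof.
move=> _ Hv Hopt Hfe.
exact: (@main_sec R m n A b c xs (proj1 Hv) Hopt Hv Hfe).
Qed.
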